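(* Let $n\ge n'\ge 1$, let $p_1,\dots,p_n\ge 0$, and let $x_1,\dots,x_n$ and $x_{\{j\}\cup\{j'\}}$ ($j,j'\in\{1,\dots,n\}$) be reals with $x_{\{j\}\cup\{j'\}}=x_{\{j'\}\cup\{j\}}\ge 0$, $x_{\{j\}\cup\{j\}}=x_j\ge 0$, such that the $(n+1)\times(n+1)$ matrix $X$ indexed by $0,1,\dots,n$ with $X_{0,0}=1$, $X_{0,j}=X_{j,0}=x_j$, $X_{j,j'}=x_{\{j\}\cup\{j'\}}$ is positive semidefinite. Then for every subset $S\subseteq\{1,\dots,n'\}$, $$\sum_{j=1}^{n'}p_j\big(p_1x_{\{j\}\cup\{1\}}+\dots+p_jx_{\{j\}\cup\{j\}}\big)\ \ge\ \sum_{j\in\{1,\dots,n'\}\setminus S}x_jp_j^2+\frac12\Big(\sum_{j\in S}x_jp_j^2+\Big(\sum_{j\in S}x_jp_j\Big)^2\Big).$$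
   Context: This is the per-machine form of the constraints of the SDP relaxation: for a fixed machine $i$, $x_j$ stands for $x_{ij}$, $x_{\{j\}\cup\{j'\}}$ for $x_{\{ij\}\cup\{ij'\}}$, $p_j$ for $p_{ij}$, and $X$ is the moment matrix $X^{(i)}$. *)

(* Defs.v *)
From HB Require Import structures.
From mathcomp Require Import all_boot all_order all_algebra.
Set Implicit Arguments. Unset Strict Implicit. Unset Printing Implicit Defensive.
Import Order.TTheory GRing.Theory Num.Theory.
Local Open Scope ring_scope.

Definition psd (R : realFieldType) (m : nat) (A : 'M[R]_m) : Prop :=
  forall v : 'cV[R]_m, 0 <= (v^T *m A *m v) 0 0.

(* The moment matrix X indexed by 0..n: index 0 is ord0, index j+1 is lift ord0 j. *)
Definition moment_mx (R : realFieldType) (n : nat) (x : 'I_n -> R)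
  (y : 'I_n -> 'I_n -> R) : 'M[R]_(n.+1) :=
  \matrix_(a < n.+1, b < n.+1)
    match split (a : 'I_(1 + n)), split (b : 'I_(1 + n)) with
    | inl _, inl _ => 1
    | inl _, inr j => x j
    | inr j, inl _ => x j
    | inr j, inr j' => y j j'
    end.

(* Main.v *)
Require Import Defs.
From HB Require Import structures.
From mathcomp Require Import all_boot all_order all_algebra.
From mathcomp Require Import ring lra.
Import Order.TTheory GRing.Theory Num.Theory.
Local Open Scope ring_scope.

Lemma split0 n : split (ord0 : 'I_(1 + n)) = inl (ord0 : 'I_1).
Proof.
have -> : (ord0 : 'I_(1+n)) = unsplit (inl ord0) by apply: val_inj.
by rewrite unsplitK.
Qed.

Lemma splitS n (i : 'I_n) : split (lift ord0 i : 'I_(1 + n)) = inr i.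
Proof.
have -> : (lift ord0 i : 'I_(1+n)) = unsplit (inr i) by apply: val_inj.
by rewrite unsplitK.
Qed.

Section S.
Variables (R : realFieldType) (n : nat) (x : 'I_n -> R) (y : 'I_n -> 'I_n -> R).
Lemma mm00 : moment_mx x y ord0 ord0 = 1.
Proof. by rewrite mxE split0. Qed.
Lemma mm0S i : moment_mx x y ord0 (lift ord0 i) = x i.
Proof. by rewrite mxE split0 splitS. Qed.
Lemma mmS0 i : moment_mx x y (lift ord0 i) ord0 = x i.
Proof. by rewrite mxE split0 splitS. Qed.
Lemma mmSS i j : moment_mx x y (lift ord0 i) (lift ord0 j) = y i j.
Proof. by rewrite mxE !splitS. Qed.
Lemma psd_ineq (c : 'I_n -> R) (t : R) : psd (moment_mx x y) ->
  0 <= t ^+ 2 - 2 * t * (\sum_i c i * x i) + \sum_i \sum_k c k * y k i * c i.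
Proof.
move=> /(_ (\col_(a < n.+1) match split (a : 'I_(1+n)) with inl _ => t | inr j => - c j end)).
rewrite !mxE big_ord_recl /= !mxE big_ord_recl /= !mxE split0.
under eq_bigr => i _ do rewrite !mxE ?split0 ?splitS.
under [X in _ * t + X]eq_bigr => i _ do rewrite !mxE big_ord_recl !mxE ?split0 ?splitS.
under [X in _ * t + X]eq_bigr => i _ do under eq_bigr => k _ do rewrite !mxE ?split0 ?splitS.
have e1 : \sum_i - c i * x i = - \sum_i c i * x i.
  by rewrite -sumrN; apply: eq_bigr => i _; ring.
have e2 : \sum_(i < n) (t * x i + \sum_k - c k * y k i) * - c i
   = - t * \sum_i c i * x i + \sum_i \sum_k c k * y k i * c i.
  rewrite mulr_sumr -big_split /=; apply: eq_bigr => i _.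
  rewrite mulrDl mulr_suml; congr (_ + _); first ring.
  by apply: eq_bigr => k _; ring.
rewrite e1 e2 => h; lra.
Qed.
End S.

Lemma sum_sub (R : realFieldType) (I : finType) (P C : pred I) (F : I -> R) :
  (forall i, P i -> 0 <= F i) -> \sum_(i | P i && C i) F i <= \sum_(i | P i) F i.
Proof.
move=> h; rewrite [X in _ <= X](bigID C) /= lerDl sumr_ge0 // => i /andP[/h //].
Qed.

Theorem lemma1 (R : realFieldType) (n n' : nat) (p x : 'I_n -> R)
  (y : 'I_n -> 'I_n -> R)
  (hn' : (1 <= n')%N) (hnn' : (n' <= n)%N)
  (hp : forall j, 0 <= p j)
  (hsym : forall j j', y j j' = y j' j)
  (hy0 : forall j j', 0 <= y j j')
  (hdiag : forall j, y j j = x j)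
  (hx0 : forall j, 0 <= x j)
  (hX : psd (moment_mx x y))
  (S : {set 'I_n}) (hS : forall j, j \in S -> (j < n')%N) :
  \sum_(j : 'I_n | (j < n')%N) p j * (\sum_(j' : 'I_n | (j' <= j)%N) p j' * y j j')
  >= \sum_(j : 'I_n | ((j < n')%N && (j \notin S))) x j * p j ^+ 2
     + 2^-1 * (\sum_(j in S) x j * p j ^+ 2 + (\sum_(j in S) x j * p j) ^+ 2).
Proof.
set f := fun j j' => p j * p j' * y j j'.
have f0 : forall j j', 0 <= f j j' by move=> j j'; rewrite /f !mulr_ge0.
set t := \sum_(j in S) x j * p j.
set D := \sum_(j in S) x j * p j ^+ 2.
set N := \sum_(j : 'I_n | (j < n')%N && (j \notin S)) x j * p j ^+ 2.
set W := \sum_(j in S) \sum_(j' in S) (if (j' < j)%N then f j j' else 0).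
set Q := \sum_(j in S) \sum_(j' in S) f j j'.
have hA : t ^+ 2 <= Q.
  have := @psd_ineq R n x y (fun i => if i \in S then p i else 0) t hX.
  have -> : \sum_i (if i \in S then p i else 0) * x i = t.
    rewrite /t [RHS]big_mkcond; apply: eq_bigr => i _; case: ifP => _; ring.
  have -> : \sum_i \sum_k (if k \in S then p k else 0) * y k i * (if i \in S then p i else 0) = Q.
    rewrite /Q [RHS]big_mkcond; apply: eq_bigr => i _; case: ifP => hi.
      rewrite [RHS]big_mkcond; apply: eq_bigr => k _; case: ifP => _; rewrite /f (hsym k i); ring.
    by rewrite big1 // => k _; ring.
  move=> h; lra.
have hB : Q = D + 2 * W.
  have e1 : forall j, j \in S -> \sum_(j' in S) f j j' =
     \sum_(j' in S) (if (j' < j)%N then f j j' else 0) + f j j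
     + \sum_(j' in S) (if (j < j')%N then f j j' else 0).
    move=> j hj; rewrite (bigD1 j) //= [X in _ = X + _ + _](bigD1 j) //=.
    rewrite [X in _ = _ + _ + X](bigD1 j) //= ltnn.
    rewrite !add0r [_ + f j j]addrC -addrA -big_split /=; congr (_ + _).
    apply: eq_bigr => k /andP[_ hk].
    case: ltngtP => [_|_|/val_inj e]; rewrite ?addr0 ?add0r //.
    by rewrite e eqxx in hk.
  have e2 : \sum_(j in S) \sum_(j' in S) (if (j < j')%N then f j j' else 0) = W.
    rewrite exchange_big /W; apply: eq_bigr => a _; apply: eq_bigr => b _.
    by case: ifP => _ //; rewrite /f hsym; ring.
  rewrite /Q (eq_bigr _ e1) !big_split /= e2 /W /D.
  have -> : \sum_(i in S) f i i = \sum_(j in S) x j * p j ^+ 2.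
    by apply: eq_bigr => i _; rewrite /f hdiag; ring.
  ring.
have hC : \sum_(j : 'I_n | (j < n')%N) p j * (\sum_(j' : 'I_n | (j' <= j)%N) p j' * y j j')
   = \sum_(j : 'I_n | (j < n')%N) x j * p j ^+ 2
     + \sum_(j : 'I_n | (j < n')%N) \sum_(j' : 'I_n | (j' < j)%N) f j j'.
  rewrite -big_split /=; apply: eq_bigr => j _.
  rewrite (bigD1 j (leqnn j)) mulrDr hdiag mulr_sumr; congr (_ + _); first ring.
  apply: congr_big => // k; last by move=> _; rewrite /f mulrA.
  by rewrite ltn_neqAle andbC.
have hD : \sum_(j : 'I_n | (j < n')%N) x j * p j ^+ 2 = N + D.
  rewrite (bigID (fun j => j \in S)) /= addrC; congr (_ + _).
  apply: eq_bigl => j; case: (boolP (j \in S)) => h; [by rewrite andbT hS | by rewrite andbF].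
have hE : W <= \sum_(j : 'I_n | (j < n')%N) \sum_(j' : 'I_n | (j' < j)%N) f j j'.
  have -> : W = \sum_(j : 'I_n | (j < n')%N && (j \in S)) \sum_(j' in S) (if (j' < j)%N then f j j' else 0).
    apply: eq_bigl => j; case: (boolP (j \in S)) => h; [by rewrite andbT hS | by rewrite andbF].
  apply: (le_trans (@sum_sub _ _ (fun j : 'I_n => (j < n')%N) (fun j : 'I_n => j \in S) _ _)).
    by move=> i _; apply: sumr_ge0 => k _; case: ifP.
  apply: ler_sum => j _.
  rewrite -big_mkcondr /=.
  rewrite (eq_bigl (fun k : 'I_n => (k < j)%N && (k \in S))); last by move=> k; rewrite andbC.
  by apply: sum_sub => k _.
rewrite hC hD.
have h2 : (2 : R)^-1 * (D + t ^+ 2) <= D + W.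
  rewrite hB in hA; lra.
lra.
Qed.
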